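(* If a tiling $T$ contains a triple $ijk$ (with $i<j<k$), then $T$ contains a dense triple $(\ell-1)\,\ell\,(\ell+1)$ for some $\ell$ with $i<\ell<k$.
   Context: Fix an integer $n\ge 3$ and write $[n]=\{1,\dots,n\}$. Let $\Lambda$ be the set of 3-element subsets of $[n]$; a triple $\{i,j,k\}$ with $i<j<k$ is written $ijk$. For a 4-element subset $F=\{i<j<k<l\}$ of $[n]$, the stick of $F$ is the sequence $(ijk,\ ijl,\ ikl,\ jkl)$. A tiling (the inversion set of a rhombus tiling of the zonogon $Z(n;2)$) is a subset $T\subseteq\Lambda$ such that for every 4-element $F\subseteq[n]$, $T\cap\mathrm{stick}(F)$ is an initial segment or a final segment of the stick (empty set and whole stick allowed). *)

(* Defs.v *)
From mathcomp Require Import all_boot.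
Set Implicit Arguments. Unset Strict Implicit. Unset Printing Implicit Defensive.

(* A subset of Lambda = 3-subsets of [n] is encoded by its characteristic
   function on increasing triples: T i j k (meaningful for 1 <= i < j < k <= n). *)
Definition triple_set := nat -> nat -> nat -> bool.

Definition in_Lambda (n : nat) (T : triple_set) : Prop :=
  forall i j k, T i j k -> [/\ 1 <= i, i < j, j < k & k <= n].

Definition stick (i j k l : nat) : seq (nat * nat * nat) :=
  [:: (i, j, k); (i, j, l); (i, k, l); (j, k, l)].

Definition pattern (T : triple_set) (s : seq (nat * nat * nat)) : seq bool :=
  [seq T t.1.1 t.1.2 t.2 | t <- s].

(* a subset of s is an initial segment iff its pattern is
   true...true false...false; a final segment iff false...false true...true *)
Definition initial_segment (b : seq bool) : Prop :=
  exists m, b = nseq m true ++ nseq (size b - m) false.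
Definition final_segment (b : seq bool) : Prop :=
  exists m, b = nseq m false ++ nseq (size b - m) true.

Definition tiling (n : nat) (T : triple_set) : Prop :=
  in_Lambda n T /\
  forall i j k l, 1 <= i -> i < j -> j < k -> k < l -> l <= n ->
    initial_segment (pattern T (stick i j k l)) \/
    final_segment (pattern T (stick i j k l)).

(* Main.v *)
Require Import Defs.
From mathcomp Require Import all_boot.
From mathcomp Require Import zify.

Lemma init4 a b c d : initial_segment [:: a;b;c;d] -> (c -> a) /\ (b -> a).
Proof.
case=> m; case: m => [|[|[|[|[|m]]]]] /= E; case: E => *; subst => //.
Qed.

Lemma fin4 a b c d : final_segment [:: a;b;c;d] -> (c -> d) /\ (b -> d).
Proof.
case=> m; case: m => [|[|[|[|[|m]]]]] /= E; case: E => *; subst => //.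
Qed.

Lemma step (n : nat) (T : triple_set) : tiling n T ->
  forall d i j k, k - i <= d -> i < j -> j < k -> T i j k ->
  exists l, [/\ i < l, l < k & T l.-1 l l.+1].
Proof.
move=> [inL H]; elim=> [|d IH] i j k hd hij hjk Tijk; first by lia.
have [Hi1 _ _ Hkn] := inL _ _ _ Tijk.
case: (ltnP i.+1 j) => hj.
  have [P|P] := H i i.+1 j k Hi1 (ltnSn _) hj hjk Hkn; rewrite /= in P.
    have [/(_ Tijk) A _] := init4 _ _ _ _ P.
    have [l [h1 h2 h3]] := IH i i.+1 j ltac:(lia) (ltnSn _) hj A.
    exists l; split => //; lia.
  have [/(_ Tijk) A _] := fin4 _ _ _ _ P.
  have [l [h1 h2 h3]] := IH i.+1 j k ltac:(lia) hj hjk A.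
  exists l; split => //; lia.
have ej : j = i.+1 by lia.
case: (ltnP j.+1 k) => hk.
  have [P|P] := H i j j.+1 k Hi1 hij (ltnSn _) hk Hkn; rewrite /= in P.
    have [_ /(_ Tijk) A] := init4 _ _ _ _ P.
    have [l [h1 h2 h3]] := IH i j j.+1 ltac:(lia) hij (ltnSn _) A.
    exists l; split => //; lia.
  have [_ /(_ Tijk) A] := fin4 _ _ _ _ P.
  have [l [h1 h2 h3]] := IH j j.+1 k ltac:(lia) (ltnSn _) hk A.
  exists l; split => //; lia.
have ek : k = j.+1 by lia.
exists j; split => //; subst => //.
Qed.

Theorem lemma4 (n : nat) (T : triple_set) :
  3 <= n -> tiling n T ->
  forall i j k, i < j -> j < k -> T i j k ->
  exists l, [/\ i < l, l < k & T l.-1 l l.+1].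
Proof.
move=> _ HT i j k hij hjk Tijk; exact: (@step n T HT (k - i) i j k (leqnn _) hij hjk Tijk).
Qed.
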